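(* Let $G=(U\sqcup V,E)$ be a bipartite graph with $U=\{u_1,\ldots,u_n\}$, $V=\{v_1,\ldots,v_s\}$, $n\ge s$, and integer weights $w:E\to\mathbb{Z}$, and let $k\in\mathbb{Z}$. Let $U'=\{u'_1,\ldots,u'_n\}$ and $V'=\{v'_1,\ldots,v'_s\}$ be new vertices, and let $G_s$ be the bipartite graph with bipartition classes $U\sqcup V'$ and $V\sqcup U'$ and edge set $E\cup E_f\cup E_U$, where $E_f=\{v'_ju'_i:\ u_iv_j\in E\}$ and $E_U=\{u_iu'_i:\ 1\le i\le n\}$. Define $w_s$ by $w_s(e)=w(e)$ for $e\in E$, $w_s(v'_ju'_i)=w(u_iv_j)$ for $v'_ju'_i\in E_f$, and $w_s(e)=k$ for $e\in E_U$. If $N$ is a minimum weight perfect matching of $\{G_s,w_s\}$, then $M=N\cap E$ is an optimum matching of $\{G,w\}$ which covers $V$.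
   Context: A matching is a set of pairwise vertex-disjoint edges; it is perfect if it covers all vertices. For a weight function $c$, the weight of a matching $M$ is $\sum_{e\in M}c(e)$; a minimum weight perfect matching is a perfect matching of minimum weight among all perfect matchings. An optimum matching of $\{G,w\}$ is a matching of maximum cardinality in $G$ whose weight is minimum among all maximum cardinality matchings of $G$. *)

(* Defs.v *)
From mathcomp Require Import all_boot all_order all_algebra.
Set Implicit Arguments. Unset Strict Implicit. Unset Printing Implicit Defensive.
Import Order.TTheory GRing.Theory Num.Theory.
Local Open Scope ring_scope.

(* A bipartite graph with classes L and R is given by an edge relation
   E : L -> R -> bool; an edge is represented by the pair (l, r).
   Weights are c : L -> R -> int (only their values on edges matter). *)

Definition is_matching (L R : finType) (E : L -> R -> bool) (M : {set L * R}) : bool :=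
  [forall p in M, E p.1 p.2] &&
  [forall p in M, forall q in M, ((p.1 == q.1) || (p.2 == q.2)) ==> (p == q)].

Definition is_perfect_matching (L R : finType) (E : L -> R -> bool) (M : {set L * R}) : bool :=
  [&& is_matching E M,
      [forall l : L, exists r : R, (l, r) \in M] &
      [forall r : R, exists l : L, (l, r) \in M]].

Definition mweight (L R : finType) (c : L -> R -> int) (M : {set L * R}) : int :=
  \sum_(p in M) c p.1 p.2.

Definition min_weight_perfect_matching (L R : finType) (E : L -> R -> bool)
  (c : L -> R -> int) (N : {set L * R}) : Prop :=
  is_perfect_matching E N /\
  forall N' : {set L * R}, is_perfect_matching E N' -> mweight c N <= mweight c N'.

Definition optimum_matching (L R : finType) (E : L -> R -> bool)
  (c : L -> R -> int) (M : {set L * R}) : Prop :=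
  [/\ is_matching E M,
      (forall M' : {set L * R}, is_matching E M' -> (#|M'| <= #|M|)%N) &
      (forall M' : {set L * R}, is_matching E M' -> #|M'| = #|M| ->
         mweight c M <= mweight c M')].

Definition covers_right (L R : finType) (M : {set L * R}) : bool :=
  [forall r : R, exists l : L, (l, r) \in M].

(* The graph G_s: left class U ⊔ V' = 'I_n + 'I_s, right class V ⊔ U' = 'I_s + 'I_n.
   inl i (left) = u_i, inr j (left) = v'_j, inl j (right) = v_j, inr i (right) = u'_i. *)
Definition Gs_edge (n s : nat) (E : 'I_n -> 'I_s -> bool)
  (a : 'I_n + 'I_s) (b : 'I_s + 'I_n) : bool :=
  match a, b with
  | inl i, inl j => E i j
  | inr j, inr i => E i j
  | inl i, inr i' => i == i'
  | inr _, inl _ => false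
  end.

Definition Gs_weight (n s : nat) (w : 'I_n -> 'I_s -> int) (k : int)
  (a : 'I_n + 'I_s) (b : 'I_s + 'I_n) : int :=
  match a, b with
  | inl i, inl j => w i j
  | inr j, inr i => w i j
  | inl _, inr _ => k
  | inr _, inl _ => 0
  end.

Definition restrict_to_G (n s : nat) (N : {set ('I_n + 'I_s) * ('I_s + 'I_n)})
  : {set 'I_n * 'I_s} :=
  [set p : 'I_n * 'I_s | (inl p.1, inl p.2) \in N].

(* Main.v *)
Require Import Defs.
From mathcomp Require Import all_boot all_order all_algebra.
From mathcomp Require Import zify.
Set Implicit Arguments. Unset Strict Implicit. Unset Printing Implicit Defensive.
Import Order.TTheory GRing.Theory Num.Theory.
Local Open Scope ring_scope.

Section S.
Variables (n s : nat) (E : 'I_n -> 'I_s -> bool) (w : 'I_n -> 'I_s -> int) (k : int).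
Notation L := ('I_n + 'I_s)%type.
Notation R := ('I_s + 'I_n)%type.

Definition mirror (N : {set L * R}) : {set 'I_n * 'I_s} :=
  [set p : 'I_n * 'I_s | (inr p.2, inr p.1) \in N].
Definition diag (N : {set L * R}) : {set 'I_n} := [set i | (inl i, inr i) \in N].

Lemma wdecomp (N : {set L * R}) : (forall p, p \in N -> Gs_edge E p.1 p.2) ->
  mweight (Gs_weight w k) N =
  mweight w (restrict_to_G N) + mweight w (mirror N) + k *+ #|diag N|.
Proof.
move=> HE.
have mw : forall (P : 'I_n -> 'I_s -> bool), mweight w [set p | P p.1 p.2] =
   \sum_i \sum_j (if P i j then w i j else 0).
  move=> P; rewrite /mweight big_mkcond pair_bigA; apply: eq_bigr => [[a b]] _.
  by rewrite inE.
rewrite /restrict_to_G /mirror (mw (fun i j => (inl i, inl j) \in N)) (mw (fun i j => (inr j, inr i) \in N)).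
have -> : mweight (Gs_weight w k) N = \sum_a \sum_b (if (a,b) \in N then Gs_weight w k a b else 0).
  by rewrite /mweight big_mkcond pair_bigA; apply: eq_bigr => [[a b]] _.
rewrite big_sumType /=.
under eq_bigr => i _ do rewrite big_sumType.
under [X in _ + X = _]eq_bigr => i _ do rewrite big_sumType.
rewrite !big_split /=.
rewrite [X in _ + X + _ = _](_ : _ = k *+ #|diag N|); last first.
  rewrite -sumr_const [RHS]big_mkcond /=; apply: eq_bigr => i _.
  rewrite (bigD1 i) //= big1 ?addr0 ?inE //.
  move=> i' Hi'; case: ifP => // /HE /=; by rewrite eq_sym (negbTE Hi').
rewrite [X in _ + (X + _) = _]big1 ?add0r; last by move=> j _; apply: big1 => i _; case: ifP.
by rewrite [X in _ + _ + X = _]exchange_big /= addrAC.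
Qed.

Lemma mE (A B : finType) (e : A -> B -> bool) (M : {set A * B}) p :
  is_matching e M -> p \in M -> e p.1 p.2.
Proof. by case/andP => /forall_inP H _ /H. Qed.

Lemma mU (A B : finType) (e : A -> B -> bool) (M : {set A * B}) p q :
  is_matching e M -> p \in M -> q \in M -> (p.1 == q.1) || (p.2 == q.2) -> p = q.
Proof.
case/andP => _ /forall_inP H Hp Hq Hc.
by move: (H _ Hp) => /forall_inP /(_ _ Hq) /implyP /(_ Hc) /eqP.
Qed.

Lemma mI (A B : finType) (e : A -> B -> bool) (M : {set A * B}) :
  (forall p, p \in M -> e p.1 p.2) ->
  (forall p q, p \in M -> q \in M -> (p.1 == q.1) || (p.2 == q.2) -> p = q) ->
  is_matching e M.
Proof.
move=> H1 H2; apply/andP; split; first by apply/forall_inP.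
apply/forall_inP => p Hp; apply/forall_inP => q Hq; apply/implyP => Hc.
by apply/eqP; apply: H2.
Qed.

Lemma card_fst (A B : finType) (e : A -> B -> bool) (M : {set A * B}) :
  is_matching e M -> #|[set p.1 | p in M]| = #|M|.
Proof.
move=> Hm; apply: card_in_imset => p q Hp Hq Heq.
by apply: (mU Hm Hp Hq); rewrite Heq eqxx.
Qed.

Lemma card_snd (A B : finType) (e : A -> B -> bool) (M : {set A * B}) :
  is_matching e M -> #|[set p.2 | p in M]| = #|M|.
Proof.
move=> Hm; apply: card_in_imset => p q Hp Hq Heq.
by apply: (mU Hm Hp Hq); rewrite Heq eqxx orbT.
Qed.

Lemma eq_ll (A B : eqType) (a b : A) : (inl a == inl b :> A + B) = (a == b).
Proof. by []. Qed.
Lemma eq_rr (A B : eqType) (a b : B) : (inr a == inr b :> A + B) = (a == b).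
Proof. by []. Qed.
Lemma eq_lr (A B : eqType) (a : A) (b : B) : (inl a == inr b :> A + B) = false.
Proof. by []. Qed.
Lemma eq_rl (A B : eqType) (a : A) (b : B) : (inr b == inl a :> A + B) = false.
Proof. by []. Qed.

Definition build (A : {set 'I_n * 'I_s}) : {set L * R} :=
  [set p : L * R | match p with
     | (inl i, inl j) => (i, j) \in A
     | (inr j, inr i) => (i, j) \in A
     | (inl i, inr i') => (i == i') && (i \notin [set q.1 | q in A])
     | _ => false end].

Lemma build_perfect A : is_matching E A -> (forall j, exists i, (i, j) \in A) ->
  is_perfect_matching (Gs_edge E) (build A).
Proof.
move=> Hm Hc; apply/and3P; split.
- apply: mI.
  + move=> [[i|j] [j'|i']]; rewrite inE //=.
    * by move=> H; apply: (mE Hm H).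
    * by case/andP.
    * by move=> H; apply: (mE Hm H).
  + move=> [[i|j] [j'|i']] [[i2|j2] [j2'|i2']]; rewrite !inE /= ?eq_ll ?eq_rr ?eq_lr ?eq_rl ?orbF ?orFb => // H1 H2 H3.
    * by case: (mU Hm H1 H2 H3) => -> ->.
    * case/andP: H2 => _ /negP [].
      by move/eqP: H3 => E3; subst; apply/imsetP; eexists; [eassumption|].
    * case/andP: H1 => _ /negP [].
      by move/eqP: H3 => E3; subst; apply/imsetP; eexists; [eassumption|].
    * by case/andP: H1 => /eqP Ei _; case/andP: H2 => /eqP Ei2 _; subst; case/orP: H3 => /eqP ->.
    * case/andP: H1 => /eqP Ei /negP []; subst.
      by move/eqP: H3 => E3; subst; apply/imsetP; eexists; [eassumption|].
    * case/andP: H2 => /eqP Ei /negP []; subst.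
      by move/eqP: H3 => E3; subst; apply/imsetP; eexists; [eassumption|].
    * by rewrite orbC in H3; case: (mU Hm H1 H2 H3) => -> ->.
- apply/forallP => [[i|j]]; apply/existsP.
  + case: (boolP (i \in [set q.1 | q in A])) => [/imsetP [[i0 j] Hij /= Ei]|Hni].
    * by subst; exists (inl j); rewrite inE.
    * by exists (inr i); rewrite inE /= eqxx Hni.
  + by case: (Hc j) => i Hi; exists (inr i); rewrite inE.
- apply/forallP => [[j|i]]; apply/existsP.
  + by case: (Hc j) => i Hi; exists (inl i); rewrite inE.
  + case: (boolP (i \in [set q.1 | q in A])) => [/imsetP [[i0 j] Hij /= Ei]|Hni].
    * by subst; exists (inr j); rewrite inE.
    * by exists (inl i); rewrite inE /= eqxx Hni.
Qed.

Lemma build_M A : restrict_to_G (build A) = A.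
Proof. by apply/setP => [[i j]]; rewrite !inE. Qed.
Lemma build_F A : mirror (build A) = A.
Proof. by apply/setP => [[i j]]; rewrite !inE. Qed.
Lemma build_D A : diag (build A) = ~: [set q.1 | q in A].
Proof. by apply/setP => i; rewrite !inE eqxx. Qed.

Lemma cardC_fst A : is_matching E A -> #|~: [set q.1 | q in A]| = (n - #|A|)%N.
Proof.
move=> Hm; have := cardsC [set q.1 | q in A]; rewrite card_ord (card_fst Hm).
lia.
Qed.

Lemma build_weight A : is_matching E A -> (forall j, exists i, (i, j) \in A) ->
  mweight (Gs_weight w k) (build A) = mweight w A + mweight w A + k *+ (n - #|A|).
Proof.
move=> Hm Hc; rewrite wdecomp ?build_M ?build_F ?build_D ?cardC_fst //.
by move=> p; apply: mE; case/and3P: (build_perfect Hm Hc).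
Qed.

Section Perf.
Variable N : {set L * R}.
Hypothesis HN : is_perfect_matching (Gs_edge E) N.

Lemma NE p : p \in N -> Gs_edge E p.1 p.2.
Proof. by move=> Hp; case/and3P: HN => Hm _ _; exact: (mE Hm Hp). Qed.
Lemma NU p q : p \in N -> q \in N -> (p.1 == q.1) || (p.2 == q.2) -> p = q.
Proof. by move=> Hp Hq Hc; case/and3P: HN => Hm _ _; exact: (mU Hm Hp Hq Hc). Qed.
Lemma NL a : exists b, (a, b) \in N.
Proof. by case/and3P: HN => _ /forallP /(_ a) /existsP. Qed.
Lemma NR b : exists a, (a, b) \in N.
Proof. by case/and3P: HN => _ _ /forallP /(_ b) /existsP. Qed.

Lemma M_match : is_matching E (restrict_to_G N).
Proof.
apply: mI.
- by move=> [i j]; rewrite inE => /NE.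
- move=> [i j] [i2 j2]; rewrite !inE /= => H1 H2 H3.
  have := NU H1 H2; rewrite /= !eq_ll => /(_ H3) [-> ->] //.
Qed.
Lemma M_cov j : exists i, (i, j) \in restrict_to_G N.
Proof.
case: (NR (inl j)) => [[i|j']] H; first by exists i; rewrite inE.
by move: (NE H).
Qed.
Lemma F_match : is_matching E (mirror N).
Proof.
apply: mI.
- by move=> [i j]; rewrite inE => /NE.
- move=> [i j] [i2 j2]; rewrite !inE /= => H1 H2 H3.
  have := NU H1 H2; rewrite /= !eq_rr orbC => /(_ H3) [-> ->] //.
Qed.
Lemma F_cov j : exists i, (i, j) \in mirror N.
Proof.
case: (NL (inr j)) => [[j'|i]] H; first by move: (NE H).
by exists i; rewrite inE.
Qed.
Lemma D_eq : diag N = ~: [set q.1 | q in restrict_to_G N].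
Proof.
apply/setP => i; rewrite !inE; apply/idP/idP.
- move=> H; apply/negP => /imsetP [[i0 j] Hij /= Ei]; subst i0.
  rewrite inE /= in Hij.
  by have := NU H Hij; rewrite /= eqxx => /(_ isT).
- move=> Hn; case: (NL (inl i)) => [[j|i']] H.
    by move/negP: Hn; case; apply/imsetP; exists (i, j); rewrite ?inE.
  by move: (NE H) => /= /eqP Ei; subst.
Qed.
End Perf.

End S.

Unset Implicit Arguments.
Set Strict Implicit.
Theorem proposition4p3 (n s : nat) (E : 'I_n -> 'I_s -> bool)
  (w : 'I_n -> 'I_s -> int) (k : int)
  (N : {set ('I_n + 'I_s) * ('I_s + 'I_n)}) :
  (s <= n)%N ->
  min_weight_perfect_matching (Gs_edge E) (Gs_weight w k) N ->
  optimum_matching E w (restrict_to_G N) /\ covers_right (restrict_to_G N).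
Proof.
move=> _ [HN Hmin].
set M := restrict_to_G N.
have Mm := M_match HN; have Mc := M_cov HN.
have Fm := F_match HN; have Fc := F_cov HN.
have cardM : #|M| = s.
  rewrite -(card_snd Mm).
  have -> : [set p.2 | p in M] = setT :> {set 'I_s}.
    apply/setP => j; rewrite inE; case: (Mc j) => i Hi.
    by apply/imsetP; exists (i, j).
  by rewrite cardsT card_ord.
have cardF : #|mirror N| = s.
  rewrite -(card_snd Fm).
  have -> : [set p.2 | p in mirror N] = setT :> {set 'I_s}.
    apply/setP => j; rewrite inE; case: (Fc j) => i Hi.
    by apply/imsetP; exists (i, j).
  by rewrite cardsT card_ord.
have wN : mweight (Gs_weight w k) N = mweight w M + mweight w (mirror N) + k *+ (n - s).
  rewrite (wdecomp (E:=E)); last by move=> p; apply: NE.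
  by rewrite (D_eq HN) (cardC_fst Mm) cardM.
have h1 := Hmin _ (build_perfect Mm Mc).
rewrite (build_weight w k Mm Mc) wN cardM in h1.
have h2 := Hmin _ (build_perfect Fm Fc).
rewrite (build_weight w k Fm Fc) wN cardF in h2.
split; last by apply/forallP => j; apply/existsP; apply: Mc.
split => //.
- move=> M' HM'; rewrite cardM -(card_snd HM').
  by rewrite -[X in (_ <= X)%N]card_ord; apply: max_card.
- move=> M' HM' cM'.
  have Mc' : forall j, exists i, (i, j) \in M'.
    have : [set q.2 | q in M'] = setT.
      apply/eqP; rewrite eqEcard subsetT /= cardsT card_ord (card_snd HM') cM' cardM.
      by [].
    move=> Hs j; have : j \in [set q.2 | q in M'] by rewrite Hs.
    by case/imsetP => [[i j0] Hij /= ->]; exists i.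
  have h3 := Hmin _ (build_perfect HM' Mc').
  rewrite (build_weight w k HM' Mc') wN cM' cardM in h3.
  lia.
Qed.
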